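(* Let $X$ be a finite discrete space with at least two elements, $\Gamma$ a nonempty countable set, and $\varphi:\Gamma\to\Gamma$ one-to-one without periodic points. Then $X^\Gamma$ has an uncountable subset $M$ consisting of transitive points of $\sigma_\varphi$, and there exists $r>0$ such that for all distinct $x,y\in M$: $F^*_{xy}(t)=1$ for every $t>0$, and $F_{xy}(r)=0$.
   Context: $X^\Gamma$ has the product topology and a fixed compatible metric $d$; $\sigma_\varphi((x_\alpha)_{\alpha\in\Gamma})=(x_{\varphi(\alpha)})_{\alpha\in\Gamma}$. A point $x$ is a transitive point if $\{\sigma_\varphi^n(x):n\ge0\}$ is dense in $X^\Gamma$. With $f=\sigma_\varphi$, $\xi(x,y,t,n)=\#\{i\in\{0,\dots,n-1\}:d(f^i(x),f^i(y))<t\}$, $F_{xy}(t)=\liminf_n\xi(x,y,t,n)/n$, $F^*_{xy}(t)=\limsup_n\xi(x,y,t,n)/n$. *)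

(* Defs.v *)
From HB Require Import structures.
From mathcomp Require Import all_boot all_order all_algebra.
From mathcomp Require Import all_classical all_reals.
From mathcomp Require Import topology normedtype sequences.
Set Implicit Arguments. Unset Strict Implicit. Unset Printing Implicit Defensive.
Import Order.TTheory GRing.Theory Num.Theory.
Local Open Scope classical_set_scope.
Local Open Scope ring_scope.

(* Product topology on X^Gamma with X discrete: U is open iff around each of
   its points it contains a cylinder determined by finitely many coordinates. *)
Definition prod_open (X : Type) (Γ : eqType) (U : set (Γ -> X)) : Prop :=
  forall x, U x -> exists S : seq Γ,
    forall y, (forall a, a \in S -> y a = x a) -> U y.

Definition is_metric (R : realType) (T : Type) (d : T -> T -> R) : Prop :=
  (forall x y, 0 <= d x y) /\ (forall x y, d x y = 0 <-> x = y) /\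
  (forall x y, d x y = d y x) /\ (forall x y z, d x z <= d x y + d y z).

Definition metric_open (R : realType) (T : Type) (d : T -> T -> R) (U : set T) : Prop :=
  forall x, U x -> exists2 e : R, 0 < e & forall y, d x y < e -> U y.

Definition compatible_metric (R : realType) (X : Type) (Γ : eqType) (d : (Γ -> X) -> (Γ -> X) -> R) : Prop :=
  is_metric d /\ (forall U, metric_open d U <-> prod_open U).

Definition shift (X Γ : Type) (φ : Γ -> Γ) (x : Γ -> X) : Γ -> X := fun a => x (φ a).

Definition has_no_periodic_points (Γ : Type) (φ : Γ -> Γ) : Prop :=
  forall (n : nat) (a : Γ), (0 < n)%N -> iter n φ a <> a.

Definition transitive_point (X : Type) (Γ : eqType) (φ : Γ -> Γ) (x : Γ -> X) : Prop :=
  forall U : set (Γ -> X), prod_open U -> U !=set0 ->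
    exists n : nat, U (iter n (shift φ) x).

Definition xi (R : realType) (X Γ : Type) (φ : Γ -> Γ)
  (d : (Γ -> X) -> (Γ -> X) -> R) (x y : Γ -> X) (t : R) (n : nat) : nat :=
  count (fun i => d (iter i (shift φ) x) (iter i (shift φ) y) < t) (iota 0 n).

Definition Fl (R : realType) (X Γ : Type) (φ : Γ -> Γ)
  (d : (Γ -> X) -> (Γ -> X) -> R) (x y : Γ -> X) (t : R) : R :=
  limn_inf (fun n : nat => (xi φ d x y t n)%:R / n%:R : R).

Definition Fu (R : realType) (X Γ : Type) (φ : Γ -> Γ)
  (d : (Γ -> X) -> (Γ -> X) -> R) (x y : Γ -> X) (t : R) : R :=
  limn_sup (fun n : nat => (xi φ d x y t n)%:R / n%:R : R).

(* Main.v *)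
Require Import Defs.
From HB Require Import structures.
From mathcomp Require Import all_boot all_order all_algebra.
From mathcomp Require Import all_classical all_reals.
From mathcomp Require Import topology normedtype sequences.
Import Order.TTheory GRing.Theory Num.Theory.
Local Open Scope classical_set_scope.
From mathcomp Require Import lra.
Set Implicit Arguments. Unset Strict Implicit. Unset Printing Implicit Defensive.

Section Constr.
Variables (X : finType) (Γ : countType) (φ : Γ -> Γ) (c0 c1 : X).
Hypotheses (φinj : injective φ) (noper : has_no_periodic_points φ).

Lemma iter_injective n : injective (iter n φ).
Proof. elim: n => [|n IH] x y //= /φinj; exact: IH. Qed.

Lemma hit_once a b : exists N, forall n, (N <= n)%N -> iter n φ a != b.
Proof.
case: (pselect (exists n0, iter n0 φ a = b)) => [[n0 h0]|hn]; last first.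
  by exists 0%N => n _; apply/eqP => h; apply: hn; exists n.
exists n0.+1 => n hn; apply/eqP => h.
have e : n = (n0 + (n - n0))%N by rewrite subnKC // ltnW.
move: h; rewrite e iterD -h0 => /(@iter_injective n0).
apply: noper; by rewrite subn_gt0.
Qed.

Lemma avoid1 a (K : seq Γ) : exists N, forall n, (N <= n)%N -> iter n φ a \notin K.
Proof.
elim: K => [|b K [N2 h2]]; first by exists 0%N.
have [N1 h1] := hit_once a b.
exists (maxn N1 N2) => n; rewrite geq_max => /andP[n1 n2].
by rewrite in_cons negb_or h1 //= h2.
Qed.

Lemma avoid (S K : seq Γ) : exists N, forall n, (N <= n)%N ->
  forall a, a \in S -> iter n φ a \notin K.
Proof.
elim: S => [|a S [N2 h2]]; first by exists 0%N.
have [N1 h1] := avoid1 a K.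
exists (maxn N1 N2) => n; rewrite geq_max => /andP[n1 n2] c.
by rewrite in_cons => /orP[/eqP->|]; [apply: h1|apply: h2].
Qed.

Definition Sk k : seq Γ := pmap (@pickle_inv Γ) (iota 0 k).

Lemma Sk_uniq k : uniq (Sk k).
Proof. apply: pmap_uniq; [exact: pickle_invK | exact: iota_uniq]. Qed.

Lemma mem_Sk b k : (pickle b < k)%N -> b \in Sk k.
Proof.
move=> h; rewrite mem_pmap; apply/mapP; exists (pickle b); last by rewrite pickleK_inv.
by rewrite mem_iota.
Qed.

Lemma Sk_cover (S : seq Γ) : exists K, forall k, (K <= k)%N -> {subset S <= Sk k}.
Proof.
elim: S => [|a S [K hK]]; first by exists 0%N.
exists (maxn (pickle a).+1 K) => k; rewrite geq_max => /andP[k1 k2] b.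
rewrite in_cons => /orP[/eqP->|]; [exact: mem_Sk | exact: hK].
Qed.

Definition target j : option (nat * seq X) := unpickle j.

Definition Sst m : seq Γ :=
  if m %% 3 == 2 then (if target (m %/ 3) is Some (k, w) then Sk k else [::])
  else Sk m.
Definition Lst m N := if m %% 3 == 2 then 1%N else (m * N.+1)%N.
Definition region S N L := flatten [seq map (iter n φ) S | n <- iota N L].
Definition chooseN S K := projT1 (cid (avoid S K)).
Lemma chooseNP S K n : (chooseN S K <= n)%N -> forall a, a \in S -> iter n φ a \notin K.
Proof. exact: (projT2 (cid (avoid S K))). Qed.

Fixpoint Kacc m := if m is m'.+1 then
  Kacc m' ++ region (Sst m') (chooseN (Sst m') (Kacc m')) (Lst m' (chooseN (Sst m') (Kacc m')))
  else [::].
Definition Nst m := chooseN (Sst m) (Kacc m).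
Definition Reg m := region (Sst m) (Nst m) (Lst m (Nst m)).
Lemma KaccS m : Kacc m.+1 = Kacc m ++ Reg m. Proof. by []. Qed.

Lemma regionP b S N L : b \in region S N L ->
  exists n a, [/\ (N <= n < N + L)%N, a \in S & b = iter n φ a].
Proof.
move/flattenP=> [s /mapP[n hn ->] /mapP[a ha ->]].
by exists n, a; split => //; rewrite -mem_iota.
Qed.

Lemma region_mem n a S N L : (N <= n < N + L)%N -> a \in S -> iter n φ a \in region S N L.
Proof.
move=> hn ha; apply/flattenP; exists (map (iter n φ) S); last exact: map_f.
by apply/mapP; exists n; rewrite ?mem_iota.
Qed.

Lemma Reg_K m m' b : (m' < m)%N -> b \in Reg m' -> b \in Kacc m.
Proof.
elim: m => // m IH; rewrite ltnS leq_eqVlt => /orP[/eqP->|h] hb; rewrite KaccS mem_cat.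
  by rewrite hb orbT.
by rewrite IH.
Qed.

Lemma Reg_notK m b : b \in Reg m -> b \notin Kacc m.
Proof.
move/regionP=> [n [a [/andP[h1 _] ha ->]]]; exact: chooseNP h1 a ha.
Qed.

Lemma Reg_uniq m m' b : b \in Reg m -> b \in Reg m' -> m = m'.
Proof.
move=> h h'; case: (ltngtP m m') => // hlt.
  by move: (Reg_notK h') => /negP; case; exact: Reg_K hlt h.
by move: (Reg_notK h) => /negP; case; exact: Reg_K hlt h'.
Qed.

Definition v j := logn 2 j.+1.

Definition Pval (t : nat -> bool) m b : X :=
  if m %% 3 == 0 then c0 else if m %% 3 == 1 then (if t (v (m %/ 3)) then c1 else c0)
  else if target (m %/ 3) is Some (k, w) then nth c0 w (index b (map (iter (Nst m) φ) (Sk k)))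
  else c0.

Definition xt (t : nat -> bool) (b : Γ) : X :=
  match pselect (exists m, b \in Reg m) with
  | left e => Pval t (xchoose (P := fun m => b \in Reg m) e) b
  | right _ => c0 end.

Lemma xt_reg t m b : b \in Reg m -> xt t b = Pval t m b.
Proof.
move=> h; rewrite /xt; case: pselect => [e|ne]; last by case: ne; exists m.
by rewrite (Reg_uniq (xchooseP e) h).
Qed.

Lemma xt_close t m n a : m %% 3 = 0 -> (Nst m <= n < Nst m + Lst m (Nst m))%N ->
  a \in Sk m -> xt t (iter n φ a) = c0.
Proof.
move=> hm hn ha; rewrite (@xt_reg t m) /Pval ?hm //.
by apply: region_mem hn _; rewrite /Sst hm.
Qed.

Lemma xt_far t m n a : m %% 3 = 1 -> (Nst m <= n < Nst m + Lst m (Nst m))%N ->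
  a \in Sk m -> xt t (iter n φ a) = if t (v (m %/ 3)) then c1 else c0.
Proof.
move=> hm hn ha; rewrite (@xt_reg t m) /Pval ?hm //.
by apply: region_mem hn _; rewrite /Sst hm.
Qed.

Lemma xt_trans t j k (z : Γ -> X) a : target j = Some (k, map z (Sk k)) ->
  a \in Sk k -> xt t (iter (Nst (j * 3 + 2)) φ a) = z a.
Proof.
have hm : (j * 3 + 2) %% 3 = 2 by rewrite modnMDl.
have hd : (j * 3 + 2) %/ 3 = j by rewrite divnMDl // (divn_small (isT : 2 < 3)) addn0.
move=> ht ha; rewrite (@xt_reg t (j * 3 + 2)) /Pval ?hm ?hd ?ht /=.
  rewrite index_map; last exact: iter_injective.
  rewrite (set_nth_default (z a)); last by rewrite size_map index_mem.
  by rewrite (nth_map a) ?index_mem // nth_index.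
apply: region_mem; last by rewrite /Sst hm hd ht.
by rewrite /Lst hm addn1 leqnn ltnSn.
Qed.

End Constr.

Lemma iter_shift (X Γ : Type) (φ : Γ -> Γ) n (x : Γ -> X) :
  iter n (Defs.shift φ) x = fun a => x (iter n φ a).
Proof.
elim: n => // n IH; apply: funext => a.
by rewrite iterS IH /Defs.shift -iterSr.
Qed.

Lemma count_block_all (P : pred nat) N L :
  (forall i, (N <= i < N + L)%N -> P i) -> (L <= count P (iota 0 (N + L)))%N.
Proof.
move=> h; rewrite iotaD count_cat add0n.
rewrite (@eq_in_count _ _ predT (iota N L)) ?count_predT ?size_iota ?leq_addl //.
by move=> i; rewrite mem_iota => /h.
Qed.

Lemma count_block_none (P : pred nat) N L :
  (forall i, (N <= i < N + L)%N -> ~~ P i) -> (count P (iota 0 (N + L)) <= N)%N.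
Proof.
move=> h; rewrite iotaD count_cat add0n.
rewrite (@eq_in_count _ _ pred0 (iota N L)) ?count_pred0 ?addn0.
  by rewrite (leq_trans (count_size _ _)) ?size_iota.
by move=> i; rewrite mem_iota => /h /negbTE.
Qed.

Local Open Scope ring_scope.

Lemma cyl (R : realType) (X : Type) (Γ : eqType) (d : (Γ -> X) -> (Γ -> X) -> R) :
  compatible_metric d -> forall z (e : R), 0 < e ->
  exists S : seq Γ, forall y, (forall a, a \in S -> y a = z a) -> d z y < e.
Proof.
move=> [[d0 [dE [dS dT]]] hU] z e he.
have mo : metric_open d (fun y => d z y < e).
  move=> y hy; exists (e - d z y); first by rewrite subr_gt0.
  move=> w hw; rewrite (le_lt_trans (dT z y w)) //.
  by rewrite -ltrBrDl.
have hz : d z z < e by rewrite (proj2 (dE z z) erefl).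
have [S hS] := (proj1 (hU _) mo) z hz.
by exists S.
Qed.

Lemma uncountable_range (T : Type) (F : (nat -> bool) -> T) :
  injective F -> ~ countable (range F).
Proof.
move=> Finj /countable_injP [f finj].
pose g t := f (F t).
have ginj : injective g.
  move=> t t' h; apply: Finj; apply: (finj _ _ _ _ h); apply/mem_set; [exists t | exists t'] => //.
pose h (n : nat) : nat -> bool :=
  if pselect (exists t, g t = n) is left e then projT1 (cid e) else fun _ => false.
pose ts := fun n => ~~ h n n.
have hg : h (g ts) = ts.
  rewrite /h; case: pselect => [e|ne]; last by case: ne; exists ts.
  by apply: ginj; rewrite (projT2 (cid e)).
have e1 := congr1 (fun s => s (g ts)) hg.
have e2 : h (g ts) (g ts) = ~~ h (g ts) (g ts) := e1.
by move: e2; case: (h (g ts) (g ts)).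
Qed.

Lemma v_hits k B : exists2 j, (B <= j)%N & v j = k.
Proof.
exists (2 ^ k * (2 * B).+1).-1.
  rewrite -ltnS prednK ?muln_gt0 ?expn_gt0 //.
  apply: (@leq_trans (2 * B).+1); first by rewrite ltnS leq_pmull.
  by rewrite leq_pmull // expn_gt0.
rewrite /v prednK ?muln_gt0 ?expn_gt0 // lognM ?expn_gt0 //.
by rewrite pfactorK // logn_coprime ?addn0 // coprime2n /= oddM.
Qed.

Lemma ratio_lo (R : realType) (N m c : nat) (e : R) : 0 < e -> 1 <= e * m%:R ->
  (m * N.+1 <= c)%N -> 1 - e <= c%:R / (N + m * N.+1)%:R.
Proof.
move=> he hm hc.
have m1 : (0 < m)%N.
  by rewrite lt0n; apply/eqP => m0; move: hm; rewrite m0 mulr0 ler10.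
have hD : 0 < (N + m * N.+1)%:R :> R by rewrite ltr0n addn_gt0 muln_gt0 m1 /= orbT.
rewrite ler_pdivlMr //.
have hc' : (m * N.+1)%:R <= c%:R :> R by rewrite ler_nat.
move: hc' hD; rewrite !natrD !natrM -addn1 natrD.
have n0 : 0 <= N%:R :> R by [].
move: hm n0; set n := N%:R; set mm := m%:R; set cc := c%:R => hm n0 hc' hD.
have : 0 <= (e * mm - 1) * (n + 1) by rewrite mulr_ge0 // ?subr_ge0 // addr_ge0.
have : 0 <= e * n by rewrite mulr_ge0 // ltW.
nra.
Qed.

Lemma ratio_hi (R : realType) (N m c : nat) (e : R) : 0 < e -> 1 <= e * m%:R ->
  (c <= N)%N -> c%:R / (N + m * N.+1)%:R <= e.
Proof.
move=> he hm hc.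
have m1 : (0 < m)%N.
  by rewrite lt0n; apply/eqP => m0; move: hm; rewrite m0 mulr0 ler10.
have hD : 0 < (N + m * N.+1)%:R :> R by rewrite ltr0n addn_gt0 muln_gt0 m1 /= orbT.
rewrite ler_pdivrMr //.
have hc' : c%:R <= N%:R :> R by rewrite ler_nat.
move: hc' hD; rewrite !natrD !natrM -addn1 natrD.
have n0 : 0 <= N%:R :> R by [].
move: hm n0; set n := N%:R; set mm := m%:R; set cc := c%:R => hm n0 hc' hD.
have : 0 <= (e * mm - 1) * (n + 1) by rewrite mulr_ge0 // ?subr_ge0 // addr_ge0.
have : 0 <= e * n by rewrite mulr_ge0 // ltW.
nra.
Qed.

Lemma archi_e (R : realType) (e : R) : 0 < e -> exists K : nat, forall m, (K <= m)%N -> 1 <= e * m%:R.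
Proof.
move=> he; exists (Num.Def.archi_bound e^-1) => m hm.
have h0 : 0 <= e^-1 by rewrite invr_ge0 ltW.
have h := archi_boundP h0.
rewrite -[X in X <= _](mulfV (lt0r_neq0 he)) ler_pM2l // (le_trans (ltW h)) // ler_nat //.
Qed.

Lemma ratio_bounds (R : realType) (c n : nat) : (c <= n)%N -> 0 <= (c%:R / n%:R : R) <= 1.
Proof.
move=> h; apply/andP; split; first by rewrite divr_ge0.
case: n h => [|n] h; first by rewrite invr0 mulr0.
by rewrite ler_pdivrMr ?ltr0n // mul1r ler_nat.
Qed.
Lemma limsup_one (R : realType) (u : nat -> R) :
  (forall n, 0 <= u n <= 1) ->
  (forall e : R, 0 < e -> forall B, exists2 n, (B <= n)%N & 1 - e <= u n) ->
  limn_sup u = 1.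
Proof.
move=> ub hu.
have hs : sups u = fun _ => 1.
  apply: funext => n /=.
  have ne : sdrop u n !=set0 by exists (u n); exists n => /=.
  apply/le_anti/andP; split.
    apply: ge_sup => //= _ [k _ <-]; by case/andP: (ub k).
  have hub : has_ubound (sdrop u n).
    by exists 1 => _ [k _ <-]; case/andP: (ub k).
  rewrite leNgt; apply/negP => hlt.
  have [k kn hk] := hu ((1 - sup (sdrop u n)) / 2) ltac:(rewrite divr_gt0 // subr_gt0 //) n.
  have : u k <= sup (sdrop u n) by apply: ub_le_sup => //; exists k.
  have hlt' : sup (sdrop u n) < 1 := hlt.
  lra.
rewrite /limn_sup hs; apply: cvg_lim; [exact: Rhausdorff| exact: cvg_cst].
Qed.

Lemma liminf_zero (R : realType) (u : nat -> R) :
  (forall n, 0 <= u n <= 1) ->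
  (forall e : R, 0 < e -> forall B, exists2 n, (B <= n)%N & u n <= e) ->
  limn_inf u = 0.
Proof.
move=> ub hu.
have hs : infs u = fun _ => 0.
  apply: funext => n /=.
  have ne : sdrop u n !=set0 by exists (u n); exists n => /=.
  apply/le_anti/andP; split; last first.
    apply: lb_le_inf => //= _ [k _ <-]; by case/andP: (ub k).
  have hlb : has_lbound (sdrop u n).
    by exists 0 => _ [k _ <-]; case/andP: (ub k).
  rewrite leNgt; apply/negP => hlt.
  have [k kn hk] := hu (inf (sdrop u n) / 2) ltac:(rewrite divr_gt0 //) n.
  have : inf (sdrop u n) <= u k by apply: ge_inf => //; exists k.
  have hlt' : 0 < inf (sdrop u n) := hlt.
  lra.
rewrite /limn_inf hs; apply: cvg_lim; [exact: Rhausdorff| exact: cvg_cst].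
Qed.

Unset Implicit Arguments.

Theorem lemma5p2 (R : realType) (X : finType) (Γ : countType) (a0 : Γ)
  (φ : Γ -> Γ) (d : (Γ -> X) -> (Γ -> X) -> R) :
  (1 < #|X|)%N -> injective φ -> has_no_periodic_points φ ->
  compatible_metric d ->
  exists M : set (Γ -> X),
    ~ countable M /\ (forall x, M x -> transitive_point φ x) /\
    exists2 r : R, 0 < r &
      forall x y, M x -> M y -> x <> y ->
        (forall t : R, 0 < t -> Fu φ d x y t = 1) /\ Fl φ d x y r = 0.
Proof.
move=> hX φinj noper hd.
have [c0 [c1 [_ _ c01]]] := card_gt1P hX.
pose F t := xt c0 c1 φinj noper t.
pose p : Γ -> X := fun _ => c0.
pose q : Γ -> X := fun _ => c1.
have [[d0 [dE [dS dT]]] hU] := hd.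
pose NN m := Nst X φinj noper m.
have mod1 j : ((j * 3 + 1) %% 3 = 1)%N by rewrite modnMDl.
have div1 j : ((j * 3 + 1) %/ 3 = j)%N by rewrite divnMDl // (divn_small (isT : (1 < 3)%N)) addn0.
have mod0 j : ((j * 3) %% 3 = 0)%N by rewrite modnMl.
have L1 j : Lst (j * 3 + 1) (NN (j * 3 + 1)) = ((j * 3 + 1) * (NN (j * 3 + 1)).+1)%N.
  by rewrite /Lst mod1.
have L0 j : Lst (j * 3) (NN (j * 3)) = ((j * 3) * (NN (j * 3)).+1)%N.
  by rewrite /Lst mod0.
have Finj : injective F.
  move=> t t' e; apply: funext => k.
  case: (boolP (t k == t' k)) => [/eqP //|hk]; exfalso.
  have [j hj hv] := v_hits k (pickle a0).
  have ha : a0 \in Sk Γ (j * 3 + 1).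
    by apply: mem_Sk; rewrite addn1 ltnS (leq_trans hj) // leq_pmulr.
  have hn : (NN (j * 3 + 1) <= NN (j * 3 + 1) < NN (j * 3 + 1) + Lst (j * 3 + 1) (NN (j * 3 + 1)))%N.
    by rewrite leqnn L1 /= -{1}(addn0 (NN _)) ltn_add2l muln_gt0 addn1.
  have := congr1 (fun f => f (iter (NN (j * 3 + 1)) φ a0)) e.
  rewrite /= /F (xt_far _ _ _ (mod1 j) hn ha) (xt_far _ _ _ (mod1 j) hn ha) div1 hv.
  by move: hk c01; case: (t k); case: (t' k) => //= _ h e1; rewrite e1 eqxx in h.
exists (range F); split; first exact: uncountable_range.
split.
  move=> x [t _ <-] U hU' [z Uz].
  have [S hS] := hU' z Uz.
  have [K hK] := Sk_cover S.
  pose w := map z (Sk Γ K).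
  pose j := pickle (K, w).
  exists (NN (j * 3 + 2)); apply: hS => a ha.
  rewrite iter_shift; apply: xt_trans; last exact: hK K (leqnn K) a ha.
  by rewrite /target /j pickleK.
have hpq : 0 < d p q.
  rewrite lt_neqAle d0 andbT; apply/eqP => /esym /(proj1 (dE p q)) /(congr1 (fun f => f a0)) /= e.
  have e' : c0 = c1 := e.
  by move: c01; rewrite e' eqxx.
pose r := d p q / 3.
have hr : 0 < r by rewrite divr_gt0.
exists r => // x y [t _ <-] [t' _ <-] nxy.
have [k hk] : exists k, t k != t' k.
  case: (pselect (exists k, t k != t' k)) => // ne; case: nxy; congr F.
  apply: funext => k; case: (boolP (t k == t' k)) => [/eqP //|hk]; exfalso; apply: ne; by exists k.
have bnd (t1 : R) n : 0 <= ((xi φ d (F t) (F t') t1 n)%:R / n%:R : R) <= 1.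
  by apply: ratio_bounds; rewrite /xi (leq_trans (count_size _ _)) // size_iota.
split.
  move=> t0 ht0; rewrite /Fu; apply: limsup_one => // e he B.
  have ht2 : 0 < t0 / 2 by rewrite divr_gt0.
  have [S1 hS1] := cyl hd p ht2.
  have [K1 hK1] := Sk_cover S1.
  have [K2 hK2] := archi_e he.
  pose j := maxn B (maxn K1 K2).
  have hjm : (j <= j * 3)%N by rewrite leq_pmulr.
  exists (NN (j * 3) + (j * 3) * (NN (j * 3)).+1)%N.
    apply: (leq_trans _ (leq_addl (NN (j * 3)) _)).
    apply: (leq_trans (leq_maxl B (maxn K1 K2))); apply: (leq_trans hjm).
    by rewrite leq_pmulr.
  apply: ratio_lo => //.
    apply: hK2; apply: (leq_trans _ hjm); apply: (leq_trans _ (leq_maxr _ _)).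
    exact: leq_maxr.
  rewrite /xi; apply: count_block_all => i hi /=.
  rewrite !iter_shift.
  have agree (t2 : nat -> bool) : forall a, a \in S1 -> F t2 (iter i φ a) = p a.
    move=> a ha; apply: (xt_close _ _ _ (mod0 j)); first by rewrite L0.
    apply: hK1 ha; apply: (leq_trans _ hjm); apply: (leq_trans _ (leq_maxr _ _)).
    exact: leq_maxl.
  have h1 : d p (fun a => F t (iter i φ a)) < t0 / 2 := hS1 _ (agree t).
  have h2 : d p (fun a => F t' (iter i φ a)) < t0 / 2 := hS1 _ (agree t').
  apply: (le_lt_trans (dT _ p _)); rewrite (dS _ p).
  move: h1 h2; set u1 := d p _; set u2 := d p _ => h1 h2.
  lra.
rewrite /Fl; apply: liminf_zero => // e he B.
have [S2 hS2] := cyl hd p hr.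
have [S3 hS3] := cyl hd q hr.
have [K3 hK3] := Sk_cover (S2 ++ S3).
have [K2 hK2] := archi_e he.
have [j hj hv] := v_hits k (maxn B (maxn K3 K2)).
pose m := (j * 3 + 1)%N.
have hjm : (j <= m)%N by rewrite /m addn1 ltnW // ltnS leq_pmulr.
have hjB : (B <= j)%N := leq_trans (leq_maxl _ _) hj.
have hjK3 : (K3 <= j)%N := leq_trans (leq_trans (leq_maxl _ _) (leq_maxr _ _)) hj.
have hjK2 : (K2 <= j)%N := leq_trans (leq_trans (leq_maxr _ _) (leq_maxr _ _)) hj.
exists (NN m + m * (NN m).+1)%N.
  apply: (leq_trans _ (leq_addl (NN m) _)).
  apply: (leq_trans hjB); apply: (leq_trans hjm).
  by rewrite leq_pmulr.
apply: ratio_hi => //.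
  by apply: hK2; rewrite (leq_trans hjK2).
rewrite /xi; apply: count_block_none => i hi /=.
rewrite !iter_shift.
have val (t2 : nat -> bool) : forall a, a \in S2 ++ S3 ->
    F t2 (iter i φ a) = if t2 k then c1 else c0.
  move=> a ha; rewrite -hv -(div1 j); apply: (xt_far _ _ _ (mod1 j)); first by rewrite L1.
  by apply: (hK3 m) ha; exact: leq_trans hjK3 hjm.
have far (Y1 Y2 : Γ -> X) : (forall a, a \in S2 ++ S3 -> Y1 a = p a) ->
    (forall a, a \in S2 ++ S3 -> Y2 a = q a) -> ~~ (d Y1 Y2 < r).
  move=> h1 h2.
  have e1 : d p Y1 < r by apply: hS2 => a ha; apply: h1; rewrite mem_cat ha.
  have e2 : d q Y2 < r by apply: hS3 => a ha; apply: h2; rewrite mem_cat ha orbT.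
  have t1 := dT p Y1 q; have t2 := dT Y1 Y2 q.
  rewrite (dS Y2 q) in t2.
  have e3 : d p q = 3 * r by rewrite /r mulrC divfK // pnatr_eq0.
  rewrite -leNgt; move: e1 e2 t1 t2 e3 hr.
  set a1 := d p Y1; set a2 := d q Y2; set a3 := d Y1 Y2; set a4 := d Y1 q; set a5 := d p q.
  move=> *; lra.
move: hk (val t) (val t'); case: (t k); case: (t' k) => //= _ v1 v2.
  by rewrite dS; apply: far => a ha; [rewrite v2 | rewrite v1].
by apply: far => a ha; [rewrite v1 | rewrite v2].
Qed.
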